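(* For every integer $n\ge 2$ and $L=|\tau^n(a)|=2^{n+1}-1$, one has $\mathcal{C}(L)=2^{n+2}+2^n-2$.
   Context: Let $\mathcal{A}=\{a,x,y,z\}$ and let $\tau$ be the substitution (monoid morphism on finite words over $\mathcal{A}$) defined by $\tau(a)=axa$, $\tau(x)=y$, $\tau(y)=z$, $\tau(z)=x$. For a finite word $w$, $\mathrm{Sub}(w)$ denotes the set of finite (contiguous) subwords of $w$. Let $\mathrm{Sub}_\tau=\bigcup_{s\in\mathcal{A},\,n\in\mathbb{N}\cup\{0\}}\mathrm{Sub}(\tau^n(s))$. The word complexity is $\mathcal{C}(L)=$ the number of elements of $\mathrm{Sub}_\tau$ of length $L$. *)

(* Defs.v *)
From HB Require Import structures.
From mathcomp Require Import all_boot.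
Set Implicit Arguments. Unset Strict Implicit. Unset Printing Implicit Defensive.

Inductive letter := La | Lx | Ly | Lz.

Definition letter_to_ord (c : letter) : 'I_4 :=
  match c with La => inord 0 | Lx => inord 1 | Ly => inord 2 | Lz => inord 3 end.
Definition ord_to_letter (i : 'I_4) : letter :=
  match val i with 0 => La | 1 => Lx | 2 => Ly | _ => Lz end.
Lemma letter_ordK : cancel letter_to_ord ord_to_letter.
Proof. by case; rewrite /ord_to_letter /= inordK. Qed.
HB.instance Definition _ := Equality.copy letter (can_type letter_ordK).
HB.instance Definition _ := Choice.copy letter (can_type letter_ordK).
HB.instance Definition _ := Countable.copy letter (can_type letter_ordK).
HB.instance Definition _ := Finite.copy letter (can_type letter_ordK).

Definition tau_letter (c : letter) : seq letter :=
  match c with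
  | La => [:: La; Lx; La]
  | Lx => [:: Ly]
  | Ly => [:: Lz]
  | Lz => [:: Lx]
  end.

Definition tau (w : seq letter) : seq letter := flatten (map tau_letter w).

Definition tau_iter (n : nat) (w : seq letter) : seq letter := iter n tau w.

Definition in_Sub_tau (w : seq letter) : Prop :=
  exists (s : letter) (n : nat), infix w (tau_iter n [:: s]).

Definition complexity_is (L k : nat) : Prop :=
  exists S : {set L.-tuple letter},
    (forall w : L.-tuple letter, w \in S <-> in_Sub_tau w) /\ #|S| = k.

(* Main.v *)
Require Import Defs.
From mathcomp Require Import all_boot zify.
From Stdlib Require Import ClassicalEpsilon.
Set Implicit Arguments. Unset Strict Implicit. Unset Printing Implicit Defensive.

Definition cyc (k : nat) : letter :=
  match k %% 3 with 0 => Lx | 1 => Ly | _ => Lz end.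
Definition sig (c : letter) : letter :=
  match c with La => La | Lx => Ly | Ly => Lz | Lz => Lx end.

Lemma cycS k : cyc k.+1 = sig (cyc k).
Proof.
rewrite /cyc.
have: k %% 3 < 3 by rewrite ltn_mod.
have -> : k.+1 %% 3 = (k %% 3).+1 %% 3 by rewrite -[k.+1]addn1 -modnDml addn1.
by case: (k %% 3) => [|[|[|]]].
Qed.

Definition lb (c d : letter) : bool :=
  match c, d with La, La | Lx, Lx | Ly, Ly | Lz, Lz => true | _, _ => false end.
Lemma lbE c d : (c == d) = lb c d.
Proof. by case: c; case: d; rewrite ?eqxx //; apply/eqP. Qed.

Lemma cyc_neq k : cyc k != La.
Proof. by rewrite /cyc; case: (k %% 3) => [|[|n]]; rewrite lbE. Qed.

Definition W (i : nat) : letter := if odd i then cyc (logn 2 i.+1).-1 else La.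
Definition Wp (j : nat) : letter := W j.*2.+1.

Lemma logn2_odd m : odd m -> logn 2 m = 0.
Proof. by move=> h; apply: logn_coprime; rewrite coprime2n. Qed.

Lemma logn2_double m : 0 < m -> logn 2 m.*2 = (logn 2 m).+1.
Proof.
move=> hm; rewrite -mul2n lognM // (logn_prime 2 (isT : prime 2)) //.
Qed.

Lemma W_even j : W j.*2 = La.
Proof. by rewrite /W odd_double. Qed.

Lemma W_odd j : W j.*2.+1 = cyc (logn 2 j.+1).
Proof.
rewrite /W /= odd_double /= -doubleS logn2_double //.
Qed.

Lemma Wp_even j : Wp j.*2 = Lx.
Proof. by rewrite /Wp W_odd logn2_odd //= odd_double. Qed.

Lemma Wp_odd j : Wp j.*2.+1 = sig (Wp j).
Proof. by rewrite /Wp !W_odd -doubleS logn2_double // cycS. Qed.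

Lemma Wp_neq j : Wp j != La.
Proof. by rewrite /Wp W_odd cyc_neq. Qed.

Lemma parity p : exists j, p = j.*2 \/ p = j.*2.+1.
Proof.
exists p./2; move: (odd_double_half p).
by case: (odd p) => h; [right|left]; rewrite -[in LHS]h ?add0n ?add1n.
Qed.
Definition fac (f : nat -> letter) p m := mkseq (fun i => f (p + i)) m.

Lemma mkseqD (f : nat -> letter) a b :
  mkseq f (a + b) = mkseq f a ++ mkseq (fun i => f (a + i)) b.
Proof.
rewrite /mkseq iotaD map_cat add0n; congr (_ ++ _).
by rewrite -{1}[a]addn0 iotaDl -map_comp.
Qed.

Lemma eq_in_mkseq (f g : nat -> letter) m :
  (forall i, i < m -> f i = g i) -> mkseq f m = mkseq g m.
Proof.
move=> h; apply: (@eq_from_nth _ La); rewrite ?size_mkseq // => i hi.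
by rewrite !nth_mkseq // h.
Qed.

Lemma tau_cat s t : tau (s ++ t) = tau s ++ tau t.
Proof. by rewrite /tau map_cat flatten_cat. Qed.

Lemma tau_iter_cat n s t : tau_iter n (s ++ t) = tau_iter n s ++ tau_iter n t.
Proof. by elim: n => //= n IH; rewrite /tau_iter /= -tau_cat -IH. Qed.

Lemma tau_single c : c != La -> tau [:: c] = [:: sig c].
Proof. by case: c; rewrite lbE. Qed.

Lemma sig_neq c : c != La -> sig c != La.
Proof. by case: c; rewrite !lbE. Qed.

Lemma tau_iter_single n s : s != La -> exists c, c != La /\ tau_iter n [:: s] = [:: c].
Proof.
move=> hs; elim: n => [|n [c [hc IH]]]; first by exists s.
exists (sig c); split; first exact: sig_neq.
by rewrite /tau_iter iterS -/(tau_iter n _) IH tau_single.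
Qed.

Lemma tau_iter_x n : tau_iter n [:: Lx] = [:: cyc n].
Proof.
elim: n => // n IH.
by rewrite /tau_iter iterS -/(tau_iter n _) IH tau_single ?cyc_neq // cycS.
Qed.

Lemma logn_shift k b : 0 < b < 2 ^ k -> logn 2 (2 ^ k + b) = logn 2 b.
Proof.
elim: k b => [|k IH] b; first by rewrite expn0; lia.
have [j [->|->]] := parity b; move=> /andP[hb hbk].
  have hj : 0 < j < 2 ^ k by move: hb hbk; rewrite expnS -mul2n => ? ?; apply/andP; split; lia.
  rewrite expnS mul2n -doubleD !logn2_double; try (move: hj; lia).
  by rewrite IH.
rewrite !logn2_odd //= ?odd_double //.
by rewrite -addSnnS oddD expnS mul2n odd_double /= odd_double.
Qed.

Lemma W_shift k i : 0 < k -> i.+1 < 2 ^ k -> W (2 ^ k + i) = W i.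
Proof.
move=> hk hi; rewrite /W oddD oddX; case: k hk hi => // k _ hi /=.
case: (odd i) => //=; rewrite -addnS logn_shift //; apply/andP; split => //.
Qed.

Definition N n := 2 ^ n.+1 - 1.

Lemma A_eq n : tau_iter n [:: La] = mkseq W (N n).
Proof.
elim: n => [|n IH]; first by rewrite /N /= /mkseq /= /W.
rewrite /tau_iter iterSr -/(tau_iter n _) /=.
have -> : tau [:: La] = [:: La] ++ [:: Lx] ++ [:: La] by [].
rewrite !tau_iter_cat.
rewrite IH tau_iter_x.
have hp : 0 < 2 ^ n by rewrite expn_gt0.
have -> : N n.+1 = N n + (1 + N n) by rewrite /N !expnS; lia.
rewrite mkseqD mkseqD /= addn0.
have -> : W (N n) = cyc n.
  have -> : N n = (2 ^ n - 1).*2.+1 by rewrite /N expnS; lia.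
  by rewrite W_odd subn1 prednK // pfactorK.
congr (_ ++ _ :: _); apply: eq_in_mkseq => i hi.
have -> : N n + (1 + i) = 2 ^ n.+1 + i by rewrite /N expnS; lia.
by rewrite W_shift //; move: hi; rewrite /N expnS; lia.
Qed.

Lemma sub_tau_iff (w : seq letter) :
  2 <= size w -> (in_Sub_tau w <-> exists p, w = fac W p (size w)).
Proof.
move=> hw; split.
  move=> [s [m h]]; case: (eqVneq s La) => [es|ns]; last first.
    have [c [_ hc]] := tau_iter_single m ns.
    by exfalso; move: (size_infix h); rewrite hc /= => /(leq_trans hw).
  move: h; rewrite es A_eq => /infixP [pre [suf hs]].
  exists (size pre); apply: (@eq_from_nth _ La); rewrite ?size_mkseq // => i hi.
  have hsz : size pre + i < N m.
    by move: (congr1 size hs); rewrite size_mkseq !size_cat => ->; rewrite ltn_add2l ltn_addr.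
  rewrite nth_mkseq // -(nth_mkseq La W hsz) hs nth_cat ltnNge leq_addr /=.
  by rewrite addKn nth_cat hi.
move=> [p hp]; exists La, (p + size w).
rewrite A_eq.
have hle : p + size w <= N (p + size w).
  have := ltn_expl (p + size w).+1 (isT : 1 < 2); rewrite /N; lia.
rewrite -(subnKC hle); set r := N _ - _.
rewrite -addnA mkseqD mkseqD.
by rewrite -/(fac W p (size w)) -hp; apply: infix_infix.
Qed.
Definition pb (P : Prop) : bool := if excluded_middle_informative P then true else false.
Lemma pbP (P : Prop) : reflect P (pb P).
Proof. by rewrite /pb; case: excluded_middle_informative => h; constructor. Qed.

Definition FS f m : {set m.-tuple letter} := [set t | pb (exists p, val t = fac f p m)].
Lemma inFS f m (t : m.-tuple letter) : (t \in FS f m) <-> exists p, val t = fac f p m.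
Proof. by rewrite inE; split => /pbP. Qed.

Definition T m (s : seq letter) : m.-tuple letter := insubd (nseq_tuple m La) s.
Lemma TK m s : size s = m -> val (T m s) = s.
Proof. by move=> h; rewrite /T insubdK //; apply/eqP. Qed.

Lemma img_card f g m k r (E : seq letter -> seq letter) :
  (forall s, size (E s) = m) ->
  (forall s s', size s = k -> size s' = k -> E s = E s' -> s = s') ->
  (forall q, fac f (q.*2 + r) m = E (fac g q k)) ->
  #|[set t : m.-tuple letter | pb (exists q, val t = fac f (q.*2 + r) m)]| = #|FS g k|.
Proof.
move=> hsz hinj hfac.
have -> : [set t : m.-tuple letter | pb (exists q, val t = fac f (q.*2 + r) m)]
   = (fun u : k.-tuple letter => T m (E (val u))) @: FS g k.
  apply/setP => t; rewrite inE; apply/idP/idP.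
    move=> /pbP [q hq]; apply/imsetP; exists (T k (fac g q k)).
      by apply/inFS; exists q; rewrite TK // size_mkseq.
    by apply: val_inj; rewrite (TK (hsz _)) TK ?size_mkseq // -hfac.
  move=> /imsetP [u /inFS [p hp] ->]; apply/pbP; exists p.
  by rewrite (TK (hsz _)) hp hfac.
apply: card_imset => u u' /(congr1 val); rewrite !(TK (hsz _)) => /hinj h.
by apply: val_inj; apply: h; rewrite size_tuple.
Qed.

Definition Ev c (h : letter -> letter) s m :=
  mkseq (fun i => if odd i then h (nth c s i./2) else c) m.
Definition Od c (h : letter -> letter) s m :=
  mkseq (fun i => if odd i then c else h (nth c s i./2)) m.

Lemma half_double2 j : (j.*2)./2 = j.
Proof. exact: doubleK. Qed.
Lemma half_double2S j : (j.*2.+1)./2 = j.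
Proof. by rewrite -[j.*2.+1]/(true + j.*2) half_bit_double. Qed.

Lemma half_lt j m : j.*2.+1 < m -> j < m./2.
Proof.
move: (odd_double_half m); rewrite -!mul2n.
case: (odd m) => /= h1 h2; lia.
Qed.

Lemma half_le n : (n./2).*2 <= n.
Proof. move: (odd_double_half n); rewrite -!mul2n; case: (odd n) => /=; lia. Qed.

Lemma Ev_inj c h m : injective h ->
  forall s s', size s = m./2 -> size s' = m./2 -> Ev c h s m = Ev c h s' m -> s = s'.
Proof.
move=> hi s s' hs hs' E; apply: (@eq_from_nth _ c); first by rewrite hs hs'.
move=> j hj; rewrite hs in hj.
have hj2 : j.*2.+1 < m.
  move: (half_le m) hj; rewrite -!mul2n; lia.
have := congr1 (nth c ^~ j.*2.+1) E; rewrite !nth_mkseq //= odd_double /=.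
by rewrite uphalf_double => /hi.
Qed.

Lemma Od_inj c h m : injective h ->
  forall s s', size s = m.+1./2 -> size s' = m.+1./2 -> Od c h s m = Od c h s' m -> s = s'.
Proof.
move=> hi s s' hs hs' E; apply: (@eq_from_nth _ c); first by rewrite hs hs'.
move=> j hj; rewrite hs in hj.
have hj2 : j.*2 < m.
  move: (half_le m.+1) hj; rewrite -!mul2n; lia.
have := congr1 (nth c ^~ j.*2) E; rewrite !nth_mkseq // odd_double /=.
by rewrite half_double2 => /hi.
Qed.

Lemma split_card f g c h m :
  (forall j, f j.*2 = c) -> (forall j, f j.*2.+1 = h (g j)) -> injective h ->
  (forall q, h (g q) = c -> h (g q.+1) = c -> False) -> 3 <= m ->
  #|FS f m| = #|FS g m./2| + #|FS g m.+1./2|.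
Proof.
move=> hf0 hf1 hi hdis hm.
set A := [set t : m.-tuple letter | pb (exists q, val t = fac f (q.*2 + 0) m)].
set B := [set t : m.-tuple letter | pb (exists q, val t = fac f (q.*2 + 1) m)].
have hU : FS f m = A :|: B.
  apply/setP => t; apply/idP/idP.
    move=> /inFS [p hp]; have [q [eq|eq]] := parity p; rewrite eq in hp;
      rewrite in_setU !inE; apply/orP; [left|right]; apply/pbP; exists q;
      by rewrite ?addn0 ?addn1.
  by rewrite in_setU !inE => /orP [] /pbP [q hq]; apply/pbP; eexists; exact: hq.
have hI : A :&: B = set0.
  apply/setP => t; rewrite !inE; apply/negbTE; apply/negP.
  move=> /andP [/pbP [q hq] /pbP [q' hq']].
  have E := hq; rewrite hq' addn0 addn1 in E.
  have e0 := congr1 (nth La ^~ 0) E; have e2 := congr1 (nth La ^~ 2) E.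
  rewrite /= !nth_mkseq ?(leq_trans _ hm) // in e0 e2.
  rewrite !addn0 hf0 hf1 in e0.
  have h1 : q.*2 + 2 = q.+1.*2 by rewrite doubleS addn2.
  have h2 : q'.*2.+1 + 2 = q'.+1.*2.+1 by rewrite doubleS addn2.
  rewrite h1 h2 hf0 hf1 in e2.
  by apply: (hdis q').
rewrite hU cardsU hI cards0 subn0; congr (_ + _).
  apply: img_card (fun s => Ev c h s m) _ _ _.
  - by move=> s; rewrite size_mkseq.
  - exact: Ev_inj.
  move=> q; apply: eq_in_mkseq => i hi'; rewrite addn0.
  have [j [ei|ei]] := parity i; subst i.
    by rewrite odd_double -doubleD hf0.
  rewrite /= odd_double /= uphalf_double nth_mkseq; last exact: half_lt.
  by rewrite addnS -doubleD hf1.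
apply: img_card (fun s => Od c h s m) _ _ _.
- by move=> s; rewrite size_mkseq.
- exact: Od_inj.
move=> q; apply: eq_in_mkseq => i hi'.
have [j [ei|ei]] := parity i; subst i.
  rewrite odd_double /= half_double2 nth_mkseq; last exact: (@half_lt j m.+1 hi').
  by rewrite addn1 addSn -doubleD hf1.
rewrite /= odd_double /= addn1 addSn -addnS -doubleS -doubleD.
by rewrite hf0.
Qed.
Lemma card_FS_list f m (l : seq (seq letter)) :
  uniq l -> all (fun s => size s == m) l -> (forall p, fac f p m \in l) ->
  all (fun s => pb (exists p, s = fac f p m)) l -> #|FS f m| = size l.
Proof.
move=> hu hsz hin hw; rewrite cardE.
have hp : perm_eq (map val (enum (FS f m))) l.
  apply: uniq_perm => //.
    by rewrite map_inj_uniq ?enum_uniq //; exact: val_inj.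
  move=> s; apply/mapP/idP.
    by move=> [t]; rewrite mem_enum => /inFS [p hp] ->; rewrite hp.
  move=> hs; have /eqP hs1 := allP hsz s hs; have /pbP [p hp] := allP hw s hs.
  exists (T m s); last by rewrite TK.
  by rewrite mem_enum; apply/inFS; exists p; rewrite TK.
by rewrite -(perm_size hp) size_map.
Qed.

Lemma Wp0 : Wp 0 = Lx. Proof. exact: (Wp_even 0). Qed.
Lemma Wp1 : Wp 1 = Ly. Proof. by rewrite (Wp_odd 0) Wp0. Qed.
Lemma Wp2 : Wp 2 = Lx. Proof. exact: (Wp_even 1). Qed.
Lemma Wp3 : Wp 3 = Lz. Proof. by rewrite (Wp_odd 1) Wp1. Qed.
Lemma Wp4 : Wp 4 = Lx. Proof. exact: (Wp_even 2). Qed.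
Lemma Wp6 : Wp 6 = Lx. Proof. exact: (Wp_even 3). Qed.
Lemma Wp7 : Wp 7 = Lx. Proof. by rewrite (Wp_odd 3) Wp3. Qed.

Lemma D1 : #|FS Wp 1| = 3.
Proof.
rewrite (@card_FS_list _ _ [:: [:: Lx]; [:: Ly]; [:: Lz]]) //.
- by rewrite /= !inE !eqseq_cons !lbE.
- move=> p; rewrite /fac /mkseq /= addn0.
  by move: (Wp_neq p); case: (Wp p); rewrite !lbE // => _; rewrite !inE !eqseq_cons !lbE.
rewrite /=; rewrite !andbT; apply/and3P; split; apply/pbP.
- by exists 0; rewrite /fac /mkseq /= Wp0.
- by exists 1; rewrite /fac /mkseq /= Wp1.
- by exists 3; rewrite /fac /mkseq /= Wp3.
Qed.

Lemma D2 : #|FS Wp 2| = 5.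
Proof.
rewrite (@card_FS_list _ _ [:: [:: Lx; Lx]; [:: Lx; Ly]; [:: Lx; Lz]; [:: Ly; Lx]; [:: Lz; Lx]]) //.
- by rewrite /= !inE !eqseq_cons !lbE.
- move=> p; rewrite /fac /mkseq /= addn0.
  have [j [->|->]] := parity p.
    rewrite addn1 Wp_odd Wp_even.
    by move: (Wp_neq j); case: (Wp j); rewrite !lbE // => _; rewrite !inE !eqseq_cons !lbE.
  rewrite addn1 -doubleS Wp_odd Wp_even.
  by move: (Wp_neq j); case: (Wp j); rewrite !lbE // => _; rewrite !inE !eqseq_cons !lbE.
rewrite /= !andbT; apply/and5P; split; apply/pbP.
- by exists 6; rewrite /fac /mkseq /= Wp6 Wp7.
- by exists 0; rewrite /fac /mkseq /= Wp0 Wp1.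
- by exists 2; rewrite /fac /mkseq /= Wp2 Wp3.
- by exists 1; rewrite /fac /mkseq /= Wp1 Wp2.
- by exists 3; rewrite /fac /mkseq /= Wp3 Wp4.
Qed.
Lemma sig_inj : injective sig.
Proof. by case; case. Qed.

Lemma splitWp m : 3 <= m -> #|FS Wp m| = #|FS Wp m./2| + #|FS Wp m.+1./2|.
Proof.
move=> hm; apply: (split_card (c:=Lx) (h:=sig)) => //.
- exact: Wp_even.
- exact: Wp_odd.
- exact: sig_inj.
move=> q; have [j [->|->]] := parity q.
  by rewrite Wp_even.
by rewrite -doubleS Wp_even.
Qed.

Lemma splitW m : 3 <= m -> #|FS W m| = #|FS Wp m./2| + #|FS Wp m.+1./2|.
Proof.
move=> hm; apply: (split_card (c:=La) (h:=id)) => //.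
- exact: W_even.
- by move=> q hq; move: (Wp_neq q); rewrite hq lbE.
Qed.

Lemma Dpow k : #|FS Wp (2 ^ k.+1)| = 5 * 2 ^ k.
Proof.
elim: k => [|k IH]; first by rewrite D2.
rewrite splitWp; last by rewrite !expnS; have := expn_gt0 2 k; lia.
have e1 : (2 ^ k.+2)./2 = 2 ^ k.+1 by rewrite [2 ^ k.+2]expnS mul2n doubleK.
have e2 : (2 ^ k.+2).+1./2 = 2 ^ k.+1 by rewrite [2 ^ k.+2]expnS mul2n half_double2S.
by rewrite e1 e2 IH expnS; lia.
Qed.

Lemma Dpow1 k : #|FS Wp (2 ^ k.+2 - 1)| = 5 * 2 ^ k.+1 - 2.
Proof.
elim: k => [|k IH].
  rewrite splitWp //= D1 D2 //.
have hp := expn_gt0 2 k.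
have em : 2 ^ k.+3 - 1 = (2 ^ k.+2 - 1).*2.+1 by rewrite !expnS -!mul2n; lia.
rewrite em splitWp; last by rewrite -em !expnS; lia.
rewrite half_double2S.
have -> : (2 ^ k.+2 - 1).*2.+2 = (2 ^ k.+2).*2 by rewrite !expnS -!mul2n; lia.
rewrite doubleK IH Dpow !expnS; lia.
Qed.

Theorem mainTheorem6 (n : nat) (L : nat) :
  2 <= n ->
  L = size (tau_iter n [:: La]) ->
  L = 2 ^ n.+1 - 1 /\ complexity_is L (2 ^ n.+2 + 2 ^ n - 2).
Proof.
move=> hn hL; have hLN : L = N n by rewrite hL A_eq size_mkseq.
split; first by [].
case: n hn hL hLN => [|[|k]] // _ _ hLN.
have hp := expn_gt0 2 k.
exists (FS W L); split.
  move=> w; rewrite sub_tau_iff size_tuple; last first.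
    by rewrite hLN /N !expnS; lia.
  by split => /inFS.
rewrite hLN splitW; last by rewrite /N !expnS; lia.
have -> : N k.+2 = (2 ^ k.+2 - 1).*2.+1 by rewrite /N !expnS -!mul2n; lia.
rewrite half_double2S.
have -> : (2 ^ k.+2 - 1).*2.+2 = (2 ^ k.+2).*2 by rewrite !expnS -!mul2n; lia.
rewrite doubleK Dpow1 Dpow !expnS; lia.
Qed.
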